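(* Let $G=(V,E)$ be a finite connected simple undirected graph with root $e\in V$, and let $k\ge1$ be such that the distance $k$-graph $G^{[k]}$ is non-trivial. Let $N\ge1$ and let $(G^{\star N})^{[k]}$ be the distance $k$-graph of the $N$-fold star power $G^{\star N}$. Then there is a graph $\hat G$ on the vertex set of $G^{\star N}$ such that $$(G^{\star N})^{[k]}=(G^{[k]})^{\star N}\cup\hat G,$$ i.e. the edge set of $(G^{\star N})^{[k]}$ is the union of the edge set of $(G^{[k]})^{\star N}$ (the $N$-fold star power of the rooted graph $(G^{[k]},e)$) and the edge set of $\hat G$, and every vertex $z$ of $\hat G$ (incident to one of its edges) satisfies $\partial_{G^{\star N}}(z,e)<k$.
   Context: All graphs are simple and undirected; $\partial_H$ denotes graph distance in $H$. For a graph $H=(W,F)$ and $k\ge1$, the distance $k$-graph $H^{[k]}$ is the graph on $W$ with edges the pairs $(x,y)$ with $\partial_H(x,y)=k$. For rooted graphs $(G_1,o_1)$, $(G_2,o_2)$ the star product $G_1\star G_2$ has vertex set $V_1\times V_2$, with $(v_1,w_1)\sim(v_2,w_2)$ iff either $v_1=v_2=o_1$ and $w_1\sim w_2$, or $v_1\sim v_2$ and $w_1=w_2=o_2$; it is rooted at $(o_1,o_2)$. The $N$-fold star power $G^{\star N}$ is (on the component of the root) the graph obtained from $N$ disjoint copies of $G$ by identifying their roots into one vertex $e$; $(G^{[k]})^{\star N}$ is formed in the same way from $N$ copies of $G^{[k]}$ rooted at $e$, on the same vertex set. *)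

(* Defs.v *)
From mathcomp Require Import all_boot.
Set Implicit Arguments. Unset Strict Implicit. Unset Printing Implicit Defensive.

Inductive walk {T : Type} (r : T -> T -> Prop) : nat -> T -> T -> Prop :=
| walk0 x : walk r 0 x x
| walkS n x y z : r x y -> walk r n y z -> walk r n.+1 x z.

Definition is_dist {T : Type} (r : T -> T -> Prop) (x y : T) (d : nat) : Prop :=
  walk r d x y /\ (forall m, walk r m x y -> d <= m).

Definition distk {T : Type} (r : T -> T -> Prop) (k : nat) : T -> T -> Prop :=
  fun x y => is_dist r x y k.

(* Vertex set of the N-fold star power of a graph on V rooted at e:
   N copies of V glued at their roots.  None is the common root e;
   Some (i, v) (v <> e) is the vertex v of the i-th copy. *)
Definition starV (V : finType) (N : nat) (e : V) :=
  option {p : 'I_N * V | p.2 != e}.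

Definition emb {V : finType} {N : nat} {e : V} (i : 'I_N) (v : V) : starV N e :=
  insub (i, v).

Definition star_root (V : finType) (N : nat) (e : V) : starV N e := None.

Definition star_pow (V : finType) (N : nat) (e : V) (r : V -> V -> Prop)
  : starV N e -> starV N e -> Prop :=
  fun x y => exists (i : 'I_N) (u v : V), x = @emb V N e i u /\ y = @emb V N e i v /\ r u v.

Arguments starV : clear implicits.
Arguments star_root : clear implicits.
Arguments star_pow : clear implicits.

(* Main.v *)
Require Import Defs.
From mathcomp Require Import all_boot.
From Stdlib Require Import Classical.
Set Implicit Arguments. Unset Strict Implicit. Unset Printing Implicit Defensive.

Lemma walk_snoc T (r : T -> T -> Prop) n x y z : walk r n x y -> r y z -> walk r n.+1 x z.
Proof.
elim=> [a|m a b c hab _ IH] h; first by econstructor; [exact h| constructor].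
econstructor; [exact hab | exact: IH].
Qed.

Lemma walk_sym T (r : T -> T -> Prop) (hs : forall a b, r a b -> r b a) n x y :
  walk r n x y -> walk r n y x.
Proof. elim=> [a|m a b c hab _ IH]; [constructor | exact: walk_snoc IH (hs _ _ hab)]. Qed.

Lemma dist_sym T (r : T -> T -> Prop) (hs : forall a b, r a b -> r b a) x y d :
  is_dist r x y d -> is_dist r y x d.
Proof. case=> hw hm; split; [exact: walk_sym | move=> m /(walk_sym hs); exact: hm]. Qed.

Lemma dist_exists_aux T (r : T -> T -> Prop) (x y : T) b : forall n, n <= b ->
  walk r n x y -> exists d, is_dist r x y d /\ d <= n.
Proof.
elim: b => [|b IH] n hn hw.
- exists n; split => //; split => // m _.
  by move: hn; rewrite leqn0 => /eqP ->.
- case: (classic (forall m, walk r m x y -> n <= m)) => [h|h].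
  + by exists n; split.
  + have [m hm] := not_all_ex_not _ _ h.
    have [hwm hnm] := imply_to_and _ _ hm.
    have hlt : m < n by rewrite ltnNge; apply/negP.
    have [d [hd hdm]] := IH m (leq_trans (leq_trans hlt hn) (leqnn _) : m <= b) hwm.
    exists d; split => //; exact: leq_trans hdm (ltnW hlt).
Qed.

Lemma dist_exists T (r : T -> T -> Prop) (x y : T) n :
  walk r n x y -> exists d, is_dist r x y d /\ d <= n.
Proof. exact: (@dist_exists_aux T r x y n n (leqnn n)). Qed.

Section S.
Variables (V : finType) (N : nat) (e : V).
Local Notation SV := (starV V N e).

Definition proj (i : 'I_N) (x : SV) : V :=
  match x with Some s => if (val s).1 == i then (val s).2 else e | None => e end.
Definition inc (i : 'I_N) (x : SV) : bool :=
  match x with Some s => (val s).1 == i | None => false end.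

Lemma emb_e i : @emb V N e i e = None.
Proof. by rewrite /emb insubF //= eqxx. Qed.

Lemma emb_ne i u (hu : u != e) : @emb V N e i u = Some (exist _ (i,u) hu).
Proof. by rewrite /emb (insubT (fun p : 'I_N * V => p.2 != e) (hu : ((i,u) : 'I_N * V).2 != e)). Qed.

Lemma proj_emb i u : proj i (@emb V N e i u) = u.
Proof. case: (eqVneq u e) => [->|hu]; first by rewrite emb_e. by rewrite emb_ne /= eqxx. Qed.

Lemma proj_emb_ne i l u : l != i -> proj i (@emb V N e l u) = e.
Proof.
move=> hl; case: (eqVneq u e) => [->|hu]; first by rewrite emb_e.
by rewrite emb_ne /= (negbTE hl).
Qed.

Lemma inc_emb l u : @emb V N e l u = None \/ inc l (@emb V N e l u).
Proof.
case: (eqVneq u e) => [->|hu]; [left; exact: emb_e | right; by rewrite emb_ne /= ].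
Qed.

Lemma emb_proj i x : x = None \/ inc i x -> x = @emb V N e i (proj i x).
Proof.
case: x => [[[j u] hu]|] /= [] //.
- by move=> /eqP hj; subst j; rewrite eqxx emb_ne.
- by move=> _; rewrite emb_e.
Qed.

Lemma star_sym (r : V -> V -> Prop) (hs: forall a b, r a b -> r b a) x y :
  star_pow V N e r x y -> star_pow V N e r y x.
Proof. case=> i [u [v [-> [-> h]]]]; exists i, v, u; split; [|split]; auto. Qed.

Lemma walk_emb (r : V -> V -> Prop) n i u v :
  walk r n u v -> walk (star_pow V N e r) n (emb i u) (emb i v).
Proof.
elim=> [a|m a b c hab _ IH]; first constructor.
apply: walkS IH; exists i, a, b; auto.
Qed.

Lemma walk_proj (r : V -> V -> Prop) i n x y :
  walk (star_pow V N e r) n x y -> exists m, m <= n /\ walk r m (proj i x) (proj i y).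
Proof.
elim=> [a|m a b c hab _ [m' [hm hw]]]; first by exists 0; split => //; constructor.
case: hab => l [u [v [ha [hb huv]]]]; subst a b.
case: (eqVneq l i) => [el|hl].
- subst l; exists m'.+1; split; first by []. rewrite !proj_emb in hw *. exact: walkS huv hw.
- exists m'; split; first by rewrite (leq_trans hm).
  by rewrite (proj_emb_ne _ hl) -(proj_emb_ne v hl).
Qed.

Lemma dist_emb (r : V -> V -> Prop) i u v d :
  is_dist (star_pow V N e r) (emb i u) (emb i v) d <-> is_dist r u v d.
Proof.
split.
- case=> hw hm. have [m [hmd hw']] := walk_proj i hw. rewrite !proj_emb in hw'.
  have hdm : d <= m by apply: hm; exact: walk_emb.
  have ed : d = m by apply/eqP; rewrite eqn_leq hdm hmd.
  split; first by rewrite ed.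
  move=> m2 /(walk_emb i); exact: hm.
- case=> hw hm; split; first exact: walk_emb.
  move=> m2 /(walk_proj i) [m3 [h3 hw3]]; rewrite !proj_emb in hw3.
  exact: leq_trans (hm _ hw3) h3.
Qed.

Lemma inc_uniq i l x : inc i x -> inc l x -> i = l.
Proof. by case: x => [s|] //= /eqP <- /eqP. Qed.

Lemma edge_copy (r : V->V->Prop) x y : star_pow V N e r x y ->
  exists l, (x = None \/ inc l x) /\ (y = None \/ inc l y).
Proof. case=> l [u [v [-> [-> _]]]]; exists l; split; exact: inc_emb. Qed.

Lemma walk_cross (r : V -> V -> Prop) i n x y : walk (star_pow V N e r) n x y ->
  inc i x -> y <> None -> ~~ inc i y ->
  exists a, a < n /\ walk (star_pow V N e r) a x None.
Proof.
elim=> [a|m a b c hab hbc IH] hia hc hic; first by rewrite hia in hic.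
have [l [[ha|ha] hb]] := edge_copy hab; first by rewrite ha in hia.
have el := inc_uniq hia ha; subst l.
case: hb => [hb|hb].
- subst b. exists 1; split.
  + destruct m as [|m]; last done.
    inversion hbc; subst; congruence.
  + econstructor; [exact hab | constructor].
- have [a' [h1 h2]] := IH hb hc hic. exists a'.+1; split => //. exact: walkS hab h2.
Qed.

End S.

Theorem lemma4p1 (V : finType) (g : rel V) (e : V) (k N : nat)
  (gsym : symmetric g) (girr : irreflexive g)
  (gconn : forall x y : V, exists n, walk g n x y)
  (hk : 1 <= k)
  (hnontriv : exists x y : V, distk g k x y)
  (hN : 1 <= N) :
  exists Ghat : starV V N e -> starV V N e -> Prop,
    (forall x y, Ghat x y -> Ghat y x) /\ (forall x, ~ Ghat x x) /\
    (forall x y, distk (star_pow V N e g) k x y <->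
                 (star_pow V N e (distk g k) x y \/ Ghat x y)) /\
    (forall z, (exists w, Ghat z w) ->
       exists d, is_dist (star_pow V N e g) z (star_root V N e) d /\ d < k).
Proof.
have gs : forall a b : V, g a b -> g b a by move=> a b; rewrite gsym.
have dgs : forall a b : V, distk g k a b -> distk g k b a by move=> a b; apply: dist_sym.
have sgs := star_sym gs.
exists (fun x y => distk (star_pow V N e g) k x y /\ ~ star_pow V N e (distk g k) x y).
split; [|split; [|split]].
- move=> x y [h1 h2]; split; first apply: dist_sym h1 => a b. exact: star_sym.
  by move=> h; apply: h2; apply: star_sym h.
- move=> x [[_ hm] _]. have h := hm 0 (walk0 _ x). by move: hk; rewrite leqn0 in h; rewrite (eqP h).
- move=> x y; split.
  + move=> h. case: (classic (star_pow V N e (distk g k) x y)) => hs; [by left | by right].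
  + case=> [[i [u [v [-> [-> huv]]]]]|[]//].
    exact: (proj2 (@dist_emb _ _ _ _ i u v k) huv).
- move=> z [w [hd hn]].
  case: z hd hn => [s|] hd hn; last first.
    exists 0; split => //; split; first constructor. by [].
  set i := (val s).1.
  have hiz : inc i (Some s) by rewrite /= eqxx.
  case: (classic (w = None \/ inc i w)) => hw.
  + exfalso; apply: hn.
    have ez := emb_proj (or_intror hiz). have ew := emb_proj hw.
    exists i, (proj i (Some s)), (proj i w); split; [exact ez|split;[exact ew|]].
    apply: (proj1 (@dist_emb _ _ e _ i _ _ k)). rewrite -ez -ew. exact hd.
  + have hw1 : w <> None by move=> h; apply: hw; left.
    have hw2 : ~~ inc i w by apply/negP => h; apply: hw; right.
    have [a [ha hwa]] := walk_cross hd.1 hiz hw1 hw2.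
    have [d [hd' hda]] := dist_exists hwa.
    exists d; split => //; exact: leq_ltn_trans hda ha.
Qed.
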